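(* Let $\mu$ be a critical offspring distribution and let $X_1,X_2,\dots$ be i.i.d. with $\mathbf P(X_1=i)=\mu_{i+1}$ for $i\ge-1$. Then \[ \mathbf P\Big(\sum_{i=1}^nX_i=-1\Big)=e^{-o(n)} \] as $n\to\infty$ along all $n$ for which this probability is positive.
   Context: An offspring distribution is a probability measure $\mu=(\mu_k)_{k\ge0}$ on $\mathbb Z_+$; it is critical if $\sum_kk\mu_k=1$. *)

(* Defs.v *)
From Stdlib Require Import Reals.
From Coquelicot Require Import Coquelicot.
Open Scope R_scope.

Definition offspring_distribution (mu : nat -> R) : Prop :=
  (forall k, 0 <= mu k) /\ is_series mu 1.

Definition critical (mu : nat -> R) : Prop :=
  is_series (fun k => INR k * mu k) 1.

(* conv_pow mu n m = P(K_1 + ... + K_n = m) for K_i i.i.d. with law mu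
   (the n-fold convolution power of mu, evaluated at m). *)
Fixpoint conv_pow (mu : nat -> R) (n m : nat) : R :=
  match n with
  | O => if Nat.eqb m 0 then 1 else 0
  | S n' => sum_f_R0 (fun j => mu j * conv_pow mu n' (m - j)) m
  end.

(* With X_i = K_i - 1 (so P(X_i = i) = mu_{i+1} for i >= -1),
   walk_prob mu n = P(X_1 + ... + X_n = -1) = P(K_1 + ... + K_n = n - 1).
   For n = 0 the empty sum is 0 <> -1, so the probability is 0. *)
Definition walk_prob (mu : nat -> R) (n : nat) : R :=
  match n with
  | O => 0
  | S n' => conv_pow mu n n'
  end.

(* Main.v *)
Require Import Defs.
From Stdlib Require Import Reals Lra Lia Classical.
From Coquelicot Require Import Coquelicot.
Open Scope R_scope.

Lemma sum_nonneg (a : nat -> R) N : (forall i, (i <= N)%nat -> 0 <= a i) -> 0 <= sum_f_R0 a N.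
Proof. induction N; intros H; simpl. apply H; lia. assert (0 <= a (S N)) by (apply H; lia).
 assert (0 <= sum_f_R0 a N) by (apply IHN; intros; apply H; lia). lra. Qed.

Lemma sum_mono (a : nat -> R) m n : (forall i, 0 <= a i) -> (m <= n)%nat -> sum_f_R0 a m <= sum_f_R0 a n.
Proof. intros H Hmn. induction Hmn. lra. simpl. specialize (H (S m0)). lra. Qed.

Lemma sum_zero (a : nat -> R) N : (forall i, (i <= N)%nat -> a i = 0) -> sum_f_R0 a N = 0.
Proof. induction N; intros H; simpl. apply H; lia. rewrite IHN by (intros; apply H; lia). rewrite H by lia. lra. Qed.

Lemma sum_trunc (a : nat -> R) m n : (m <= n)%nat -> (forall i, (m < i <= n)%nat -> a i = 0) -> sum_f_R0 a n = sum_f_R0 a m.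
Proof. intros Hmn H. induction Hmn. reflexivity. simpl. rewrite IHHmn by (intros; apply H; lia). rewrite H by lia. lra. Qed.

Lemma sum_shift (a : nat -> R) N : sum_f_R0 a (S N) = a 0%nat + sum_f_R0 (fun i => a (S i)) N.
Proof. rewrite (decomp_sum a (S N)) by lia. reflexivity. Qed.

Lemma sum_scal_l (a : nat -> R) c N : sum_f_R0 (fun i => c * a i) N = c * sum_f_R0 a N.
Proof. induction N; simpl; lra. Qed.

Lemma sum_swap (a : nat -> nat -> R) n m :
  sum_f_R0 (fun i => sum_f_R0 (fun j => a i j) m) n = sum_f_R0 (fun j => sum_f_R0 (fun i => a i j) n) m.
Proof.
  induction n; simpl. reflexivity.
  rewrite IHn. rewrite <- plus_sum. reflexivity.
Qed.

Lemma tri_swap (c : nat -> nat -> R) N : (forall j n, (n < j)%nat -> c j n = 0) ->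
  sum_f_R0 (fun n => sum_f_R0 (fun j => c j n) n) N = sum_f_R0 (fun j => sum_f_R0 (fun n => c j n) N) N.
Proof. intro H. rewrite <- sum_swap. apply sum_eq. intros n Hn.
  symmetry. apply sum_trunc. lia. intros; apply H; lia. Qed.

Lemma cauchy_eq (A B : nat -> R) L :
  sum_f_R0 (fun n => sum_f_R0 (fun m => A m * B (n - m)%nat) n) L =
  sum_f_R0 (fun m => A m * sum_f_R0 B (L - m)) L.
Proof.
  induction L. simpl. lra.
  rewrite tech5, IHL, tech5. replace (S L - S L)%nat with 0%nat by lia. simpl (sum_f_R0 B 0).
  rewrite tech5.
  assert (sum_f_R0 (fun m => A m * sum_f_R0 B (S L - m)) L =
     sum_f_R0 (fun m => A m * sum_f_R0 B (L - m)) L + sum_f_R0 (fun m => A m * B (S L - m)%nat) L).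
  { rewrite <- plus_sum. apply sum_eq. intros i Hi. replace (S L - i)%nat with (S (L - i)) by lia.
    rewrite tech5. lra. }
  rewrite H, Nat.sub_diag. simpl. lra.
Qed.

Lemma cauchy_le (A B : nat -> R) N : (forall i, 0 <= A i) -> (forall i, 0 <= B i) ->
  sum_f_R0 (fun n => sum_f_R0 (fun m => A m * B (n - m)%nat) n) N <= sum_f_R0 A N * sum_f_R0 B N.
Proof. intros HA HB. rewrite cauchy_eq. rewrite Rmult_comm, scal_sum. apply sum_Rle. intros i Hi.
  apply Rmult_le_compat_l. apply HA. apply sum_mono; auto; lia. Qed.

Lemma prod_le_cauchy (A B : nat -> R) N M : (forall i, 0 <= A i) -> (forall i, 0 <= B i) ->
  sum_f_R0 A N * sum_f_R0 B M <= sum_f_R0 (fun n => sum_f_R0 (fun m => A m * B (n - m)%nat) n) (N + M).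
Proof. intros HA HB. rewrite cauchy_eq. rewrite Rmult_comm, scal_sum.
  apply Rle_trans with (sum_f_R0 (fun m => A m * sum_f_R0 B (N + M - m)) N).
  apply sum_Rle. intros i Hi. apply Rmult_le_compat_l. apply HA. apply sum_mono; auto; lia.
  apply sum_mono. intros i. apply Rmult_le_pos. apply HA. apply sum_nonneg; auto. lia. Qed.

(* first passage probabilities *)
Fixpoint fp (mu : nat -> R) (k n : nat) {struct n} : R :=
  match n with
  | O => match k with O => 1 | S _ => 0 end
  | S n' => match k with O => 0 | S k' => sum_f_R0 (fun j => mu j * fp mu (k' + j) n') n' end
  end.

Section FP.
Variable mu : nat -> R.
Hypothesis mu_nn : forall k, 0 <= mu k.

Lemma fp_nonneg : forall n k, 0 <= fp mu k n.
Proof. induction n; intros k; destruct k; simpl; try lra.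
  apply sum_nonneg. intros; apply Rmult_le_pos; auto. Qed.

Lemma fp_zero : forall n k, (n < k)%nat -> fp mu k n = 0.
Proof. induction n; intros k H; destruct k; simpl; try lia; try reflexivity.
  apply sum_zero. intros i Hi. rewrite IHn by lia. lra. Qed.

Lemma fp_mult : forall n a b, fp mu (a + b) n = sum_f_R0 (fun m => fp mu a m * fp mu b (n - m)%nat) n.
Proof.
  induction n; intros a b.
  - simpl. destruct a; destruct b; simpl; lra.
  - destruct a as [|a'].
    + rewrite sum_shift. rewrite sum_zero. simpl (0 + b)%nat. replace (S n - 0)%nat with (S n) by lia. simpl (fp mu 0 0). lra.
      intros i Hi. simpl. lra.
    + rewrite sum_shift. simpl (fp mu (S a') 0). rewrite Rmult_0_l, Rplus_0_l.
      replace (S a' + b)%nat with (S (a' + b)) by lia. simpl (fp mu (S (a'+b)) (S n)).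
      transitivity (sum_f_R0 (fun j => sum_f_R0 (fun m => mu j * fp mu (a' + j) m * fp mu b (n - m)%nat) n) n).
      { apply sum_eq. intros j Hj. replace (a' + b + j)%nat with ((a' + j) + b)%nat by lia.
        rewrite IHn. rewrite <- sum_scal_l. apply sum_eq. intros; lra. }
      rewrite <- (tri_swap (fun j m => mu j * fp mu (a' + j) m * fp mu b (n - m)%nat)).
      2:{ intros j m Hjm. rewrite fp_zero by lia. lra. }
      apply sum_eq. intros m Hm. replace (S n - S m)%nat with (n - m)%nat by lia. simpl (fp mu (S a') (S m)).
      rewrite Rmult_comm, <- sum_scal_l. apply sum_eq. intros; lra.
Qed.
End FP.

Lemma ser_lim (a : nat -> R) (l:R) : is_series a l -> is_lim_seq (sum_f_R0 a) l.
Proof. intro H. apply is_lim_seq_ext with (sum_n a). intro; apply sum_n_Reals. exact H. Qed.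
Lemma lim_ser (a : nat -> R) (l:R) : is_lim_seq (sum_f_R0 a) l -> is_series a l.
Proof. intro H. apply (is_lim_seq_ext (sum_f_R0 a) (sum_n a)) in H. exact H. intro; now rewrite sum_n_Reals. Qed.
Lemma lim_eps (u : nat -> R) (l:R) : is_lim_seq u l -> forall eps, 0 < eps -> exists N, forall n, (N <= n)%nat -> Rabs (u n - l) < eps.
Proof. intros H eps He. apply is_lim_seq_spec in H. destruct (H (mkposreal eps He)) as [N HN]. exists N. exact HN. Qed.
Lemma lim_le_c (u : nat -> R) (l c:R) N0 : is_lim_seq u l -> (forall n, (N0 <= n)%nat -> u n <= c) -> l <= c.
Proof. intros H Hc. destruct (Rle_or_lt l c) as [h|h]; auto.
 destruct (lim_eps u l H (l - c)) as [N HN]. lra.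
 specialize (HN (max N N0) (Nat.le_max_l _ _)). specialize (Hc (max N N0) (Nat.le_max_r _ _)).
 apply Rabs_def2 in HN. lra. Qed.
Lemma lim_ge_c (u : nat -> R) (l c:R) N0 : is_lim_seq u l -> (forall n, (N0 <= n)%nat -> c <= u n) -> c <= l.
Proof. intros H Hc. destruct (Rle_or_lt c l) as [h|h]; auto.
 destruct (lim_eps u l H (c - l)) as [N HN]. lra.
 specialize (HN (max N N0) (Nat.le_max_l _ _)). specialize (Hc (max N N0) (Nat.le_max_r _ _)).
 apply Rabs_def2 in HN. lra. Qed.

Lemma partial_le_series (a : nat -> R) (l : R) N : (forall i, 0 <= a i) -> is_series a l -> sum_f_R0 a N <= l.
Proof. intros Ha H. apply (lim_ge_c _ l _ N (ser_lim _ _ H)). intros n Hn. apply sum_mono; auto. Qed.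

Lemma series_le_bound (a : nat -> R) (l c : R) : is_series a l -> (forall N, sum_f_R0 a N <= c) -> l <= c.
Proof. intros H Hc. apply (lim_le_c _ l c 0 (ser_lim _ _ H)). intros; auto. Qed.

Section Conv.
Variable mu : nat -> R.
Hypothesis mu_nn : forall k, 0 <= mu k.
Hypothesis mu_sum : is_series mu 1.

Lemma conv_nonneg : forall n m, 0 <= conv_pow mu n m.
Proof. induction n; intros m; simpl. destruct (Nat.eqb m 0); lra.
  apply sum_nonneg; intros; apply Rmult_le_pos; auto. Qed.

Lemma conv_le1 : forall n m, conv_pow mu n m <= 1.
Proof. induction n; intros m; simpl. destruct (Nat.eqb m 0); lra.
  apply Rle_trans with (sum_f_R0 mu m). apply sum_Rle. intros i Hi.
  specialize (IHn (m - i)%nat). pose proof (mu_nn i). pose proof (conv_nonneg n (m - i)). nra.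
  apply partial_le_series; auto. Qed.

Lemma conv_mul : forall a x b y, conv_pow mu a x * conv_pow mu b y <= conv_pow mu (a + b) (x + y).
Proof.
  induction a; intros x b y.
  - simpl. destruct x; simpl. lra. rewrite Rmult_0_l. apply conv_nonneg.
  - simpl (S a + b)%nat. simpl conv_pow at 1. simpl conv_pow at 2.
    rewrite Rmult_comm, scal_sum. change (conv_pow mu (S (a+b)) (x+y)) with (sum_f_R0 (fun j => mu j * conv_pow mu (a+b) (x+y-j)) (x+y)).
    apply Rle_trans with (sum_f_R0 (fun j => mu j * conv_pow mu (a + b) (x + y - j)) x).
    + apply sum_Rle. intros i Hi. replace (x + y - i)%nat with ((x - i) + y)%nat by lia.
      specialize (IHa (x - i)%nat b y). pose proof (mu_nn i). pose proof (conv_nonneg b y). nra.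
    + apply sum_mono. intros; apply Rmult_le_pos; auto; apply conv_nonneg. lia.
Qed.

Lemma conv_1 : forall x, conv_pow mu 1 x = mu x.
Proof. intros [|x]. simpl. lra.
  change (conv_pow mu 1 (S x)) with (sum_f_R0 (fun j => mu j * conv_pow mu 0 (S x - j)) (S x)).
  rewrite tech5. rewrite sum_zero.
  rewrite Nat.sub_diag. simpl. lra. intros i Hi. replace (S x - i)%nat with (S (x - i)) by lia. simpl. lra. Qed.

Lemma conv_0 : forall i, conv_pow mu i 0 = mu 0%nat ^ i.
Proof. induction i. reflexivity. simpl conv_pow. simpl sum_f_R0. rewrite IHi. simpl. ring. Qed.

Lemma fp_le_conv : forall n k, (k <= n)%nat -> fp mu k n <= conv_pow mu n (n - k).
Proof.
  induction n; intros k Hk.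
  - replace k with 0%nat by lia. simpl. lra.
  - destruct k as [|k']. simpl (fp mu 0 (S n)). apply conv_nonneg.
    simpl fp. replace (S n - S k')%nat with (n - k')%nat by lia. simpl conv_pow.
    rewrite (sum_trunc _ (n - k') n) by (try lia; intros i Hi; rewrite fp_zero by lia; lra).
    apply sum_Rle. intros i Hi. apply Rmult_le_compat_l. auto.
    replace (n - k' - i)%nat with (n - (k' + i))%nat by lia. apply IHn. lia.
Qed.

Lemma fp_mass : forall N k, sum_f_R0 (fp mu k) N <= 1.
Proof.
  induction N; intros k.
  - simpl. destruct k; lra.
  - destruct k as [|k'].
    + rewrite sum_shift. rewrite sum_zero. simpl. lra. intros; simpl; lra.
    + rewrite sum_shift. simpl (fp mu (S k') 0). simpl fp.
      rewrite (tri_swap (fun j n => mu j * fp mu (k' + j) n)).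
      2:{ intros j n Hjn. rewrite fp_zero by lia. lra. }
      apply Rle_trans with (sum_f_R0 mu N). 2: apply partial_le_series; auto.
      rewrite Rplus_0_l. apply sum_Rle. intros j Hj. rewrite sum_scal_l. specialize (IHN (k' + j)%nat).
      pose proof (mu_nn j). nra.
Qed.
End Conv.

Lemma pow_diff (x y : R) j : 0 <= y <= x -> x <= 1 -> x ^ j - y ^ j <= INR j * (x - y).
Proof. intros Hy Hx. induction j. simpl; lra.
  rewrite S_INR. simpl.
  assert (0 <= y ^ j <= 1). { split. apply pow_le; lra. rewrite <- (pow1 j). apply pow_incr; lra. }
  assert (0 <= INR j) by apply pos_INR.
  assert (x * x ^ j - y * y ^ j = x * (x ^ j - y ^ j) + y ^ j * (x - y)) by ring.
  assert (x * (x ^ j - y ^ j) <= INR j * (x - y)).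
  { assert (0 <= x ^ j - y ^ j) by (assert (y^j <= x^j) by (apply pow_incr; lra); lra).
    apply Rle_trans with (1 * (x ^ j - y ^ j)). apply Rmult_le_compat_r; lra. lra. }
  assert (y ^ j * (x - y) <= 1 * (x - y)) by (apply Rmult_le_compat_r; lra).
  lra.
Qed.

Definition uu (x : R) (k : nat) : R := x ^ k - 1 + INR k * (1 - x).

Lemma uu_rec x k : uu x (S k) = x * uu x k + INR k * (1 - x) ^ 2.
Proof. unfold uu. rewrite S_INR. simpl. ring. Qed.

Lemma uu_nonneg x k : 0 <= x <= 1 -> 0 <= uu x k.
Proof. intros H. induction k. unfold uu; simpl; lra. rewrite uu_rec.
  assert (0 <= INR k) by apply pos_INR. assert (0 <= (1-x)^2) by (apply pow_le; lra).
  assert (0 <= x * uu x k) by (apply Rmult_le_pos; lra). assert (0 <= INR k * (1-x)^2) by (apply Rmult_le_pos; lra). lra. Qed.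

Lemma uu_pos x k : 0 <= x < 1 -> (2 <= k)%nat -> 0 < uu x k.
Proof. intros H Hk. destruct k as [|[|k]]; try lia. rewrite uu_rec.
  assert (0 <= x * uu x (S k)) by (apply Rmult_le_pos; [lra| apply uu_nonneg; lra]).
  assert (1 <= INR (S k)) by (rewrite S_INR; pose proof (pos_INR k); lra).
  assert (0 < (1 - x)^2) by (apply pow_lt; lra). nra. Qed.

Lemma uu_le1 x k : 0 <= x <= 1 -> uu x k <= INR k * (1 - x).
Proof. intros H. unfold uu. assert (x ^ k <= 1) by (rewrite <- (pow1 k); apply pow_incr; lra). lra. Qed.

Lemma uu_le2 x k : 0 <= x <= 1 -> uu x k <= INR k ^ 2 * (1 - x) ^ 2.
Proof. intros H. induction k. unfold uu; simpl; lra. rewrite uu_rec.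
  assert (0 <= INR k) by apply pos_INR. assert (0 <= (1-x)^2) by (apply pow_le; lra).
  assert (x * uu x k <= uu x k). { pose proof (uu_nonneg x k H). nra. }
  rewrite S_INR. nra. Qed.

Section Crit.
Variable mu : nat -> R.
Hypothesis mu_nn : forall k, 0 <= mu k.
Hypothesis mu_sum : is_series mu 1.
Hypothesis mu_crit : is_series (fun k => INR k * mu k) 1.

Lemma phi_ex x : 0 <= x <= 1 -> ex_series (fun k => mu k * x ^ k).
Proof. intros Hx. apply (@ex_series_le R_AbsRing R_CompleteNormedModule _ mu). intros n. change (norm (mu n * x ^ n)) with (Rabs (mu n * x ^ n)).
  assert (0 <= x ^ n <= 1) by (split; [apply pow_le; lra| rewrite <- (pow1 n); apply pow_incr; lra]).
  pose proof (mu_nn n). rewrite Rabs_pos_eq by nra. nra.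
  exists 1. exact mu_sum. Qed.

Definition phi x := Series (fun k => mu k * x ^ k).

Lemma phi_is x : 0 <= x <= 1 -> is_series (fun k => mu k * x ^ k) (phi x).
Proof. intros; apply Series_correct, phi_ex; auto. Qed.

Lemma series_g x : 0 <= x <= 1 -> is_series (fun k => mu k * uu x k) (phi x - x).
Proof. intros Hx. apply lim_ser.
  apply is_lim_seq_ext with (fun N => (sum_f_R0 (fun k => mu k * x ^ k) N - sum_f_R0 mu N) + (1 - x) * sum_f_R0 (fun k => INR k * mu k) N).
  { intros N. rewrite <- minus_sum, <- sum_scal_l, <- plus_sum. apply sum_eq. intros; unfold uu; ring. }
  replace (phi x - x) with ((phi x - 1) + (1 - x) * 1) by ring.
  apply is_lim_seq_plus'. apply is_lim_seq_minus'; apply ser_lim; auto. apply phi_is; auto.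
  apply (is_lim_seq_scal_l _ (1 - x) 1). apply ser_lim; auto.
Qed.

Lemma extinction e : 0 <= e <= 1 -> phi e <= e -> forall j0, (2 <= j0)%nat -> 0 < mu j0 -> e = 1.
Proof. intros He Hp j0 Hj0 Hm. destruct (Rle_or_lt 1 e) as [h|h]. lra. exfalso.
  pose proof (series_g e (conj (proj1 He) (Rlt_le _ _ h))) as Hs.
  assert (0 < mu j0 * uu e j0) by (apply Rmult_lt_0_compat; auto; apply uu_pos; [lra|lia]).
  assert (mu j0 * uu e j0 <= phi e - e).
  { apply (lim_ge_c _ _ _ j0 (ser_lim _ _ Hs)). intros n Hn.
    apply Rle_trans with (sum_f_R0 (fun k => mu k * uu e k) j0).
    - destruct j0. lia. rewrite tech5. assert (0 <= sum_f_R0 (fun k => mu k * uu e k) j0).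
      { apply sum_nonneg. intros; apply Rmult_le_pos; auto; apply uu_nonneg; lra. } lra.
    - apply sum_mono; auto. intros; apply Rmult_le_pos; auto; apply uu_nonneg; lra. }
  lra.
Qed.

Lemma g_bound eta : 0 < eta -> exists K : nat, forall x, 0 <= x <= 1 ->
   phi x - x <= INR K ^ 2 * (1 - x) ^ 2 + eta * (1 - x).
Proof. intros Heta.
  destruct (lim_eps _ _ (ser_lim _ _ mu_crit) eta Heta) as [K HK].
  specialize (HK K (le_n K)). apply Rabs_def2 in HK.
  exists K. intros x Hx. apply (series_le_bound _ _ _ (series_g x Hx)). intros N.
  set (v := fun k => if (k <=? K)%nat then 0 else INR k * mu k).
  set (w := fun k => if (k <=? K)%nat then INR k * mu k else 0).
  assert (Hvw : sum_f_R0 v N + sum_f_R0 w N <= 1).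
  { rewrite <- plus_sum. rewrite (sum_eq _ (fun k => INR k * mu k)).
    apply partial_le_series; auto. intros; apply Rmult_le_pos; auto; apply pos_INR.
    intros i _. unfold v, w. destruct (i <=? K)%nat; lra. }
  assert (Hv : sum_f_R0 v N <= eta).
  { destruct (Compare_dec.le_lt_dec K N) as [hKN|hKN].
    - assert (sum_f_R0 w N = sum_f_R0 (fun k => INR k * mu k) K).
      { rewrite (sum_trunc w K N hKN). apply sum_eq. intros i Hi. unfold w.
        rewrite (proj2 (Nat.leb_le i K) Hi). reflexivity.
        intros i Hi. unfold w. rewrite (proj2 (Nat.leb_gt i K)) by lia. reflexivity. }
      lra.
    - rewrite sum_zero. lra. intros i Hi. unfold v. rewrite (proj2 (Nat.leb_le i K)) by lia. reflexivity. }
  apply Rle_trans with (sum_f_R0 (fun k => INR K ^ 2 * (1 - x) ^ 2 * mu k + (1 - x) * v k) N).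
  { apply sum_Rle. intros k _. pose proof (mu_nn k). unfold v.
    destruct (Nat.leb_spec k K).
    - pose proof (uu_le2 x k Hx). assert (INR k ^ 2 <= INR K ^ 2).
      { apply pow_incr. split. apply pos_INR. apply le_INR; auto. }
      assert (0 <= (1-x)^2) by (apply pow_le; lra).
      assert (uu x k <= INR K ^ 2 * (1 - x) ^ 2) by nra.
      assert (mu k * uu x k <= mu k * (INR K ^ 2 * (1 - x) ^ 2)) by (apply Rmult_le_compat_l; auto).
      lra.
    - pose proof (uu_le1 x k Hx).
      assert (mu k * uu x k <= mu k * (INR k * (1 - x))) by (apply Rmult_le_compat_l; auto).
      assert (0 <= INR K ^ 2 * (1 - x) ^ 2 * mu k) by (apply Rmult_le_pos; auto; apply Rmult_le_pos; apply pow_le; [apply pos_INR|lra]).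
      lra. }
  rewrite plus_sum, sum_scal_l, sum_scal_l.
  assert (sum_f_R0 mu N <= 1) by (apply partial_le_series; auto).
  assert (0 <= INR K ^ 2 * (1-x)^2) by (apply Rmult_le_pos; apply pow_le; [apply pos_INR| lra]).
  nra.
Qed.
End Crit.

Lemma sum_nr (r : R) N : 0 <= r < 1 -> (1 - r) ^ 2 * sum_f_R0 (fun n => INR n * r ^ n) N <= r.
Proof. intros Hr.
  assert (H : forall N, (1 - r) ^ 2 * sum_f_R0 (fun n => INR n * r ^ n) N + (INR N + 1) * r ^ N * r - INR N * r ^ N * r * r = r).
  { induction N0. simpl. ring. rewrite tech5. rewrite S_INR. simpl pow.
    set (T := sum_f_R0 (fun n => INR n * r ^ n) N0) in *.
    set (p := r ^ N0) in *.
    assert (E : (1 - r) * ((1 - r) * 1) * (T + (INR N0 + 1) * (r * p)) + (INR N0 + 1 + 1) * (r * p) * r -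
      (INR N0 + 1) * (r * p) * r * r = (1 - r) ^ 2 * T + (INR N0 + 1) * p * r - INR N0 * p * r * r) by ring.
    rewrite E. exact IHN0. }
  specialize (H N). assert (0 <= r ^ N) by (apply pow_le; lra). assert (0 <= INR N) by apply pos_INR.
  assert (0 <= (INR N + 1) * r ^ N * r - INR N * r ^ N * r * r).
  { assert (INR N * r <= INR N + 1) by nra. assert (0 <= r ^ N * r) by nra. nra. }
  lra.
Qed.

Section NoDecay.
Variable mu : nat -> R.
Hypothesis mu_nn : forall k, 0 <= mu k.
Hypothesis mu_sum : is_series mu 1.
Hypothesis mu_crit : is_series (fun k => INR k * mu k) 1.
Variable j0 : nat.
Hypothesis Hj0 : (2 <= j0)%nat.
Hypothesis Hmj0 : 0 < mu j0.
Variables C r : R.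
Hypothesis HC : 0 <= C.
Hypothesis Hr : 0 <= r < 1.
Hypothesis Hbound : forall n, fp mu 1 n <= C * r ^ n.

Definition Fs N s := sum_f_R0 (fun n => fp mu 1 n * s ^ n) N.
Definition EE N := sum_f_R0 (fp mu 1) N.

Lemma fpn k n : 0 <= fp mu k n. Proof. apply fp_nonneg; auto. Qed.

Lemma Fs_nonneg N s : 0 <= s -> 0 <= Fs N s.
Proof. intros. apply sum_nonneg. intros; apply Rmult_le_pos. apply fpn. apply pow_le; auto. Qed.

Lemma EE_nonneg N : 0 <= EE N.
Proof. apply sum_nonneg. intros; apply fpn. Qed.

Lemma G0 N s : sum_f_R0 (fun n => fp mu 0 n * s ^ n) N = 1.
Proof. induction N. simpl; ring. rewrite tech5, IHN. simpl. ring. Qed.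

Lemma C1 j N s : 0 <= s -> sum_f_R0 (fun n => fp mu j n * s ^ n) N <= (Fs N s) ^ j.
Proof. intros Hs. induction j.
  - rewrite G0. simpl. lra.
  - rewrite (sum_eq _ (fun n => sum_f_R0 (fun m => (fp mu 1 m * s ^ m) * (fp mu j (n - m) * s ^ (n - m))) n)).
    2:{ intros n _. change (S j) with (1 + j)%nat. rewrite fp_mult by auto.
        rewrite Rmult_comm, scal_sum. apply sum_eq. intros m Hm.
        replace (s ^ n) with (s ^ m * s ^ (n - m)) by (rewrite <- pow_add; f_equal; lia). ring. }
    apply Rle_trans with (Fs N s * sum_f_R0 (fun n => fp mu j n * s ^ n) N).
    + apply (cauchy_le (fun m => fp mu 1 m * s ^ m) (fun k => fp mu j k * s ^ k)).
      intros; apply Rmult_le_pos; [apply fpn|apply pow_le; auto].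
      intros; apply Rmult_le_pos; [apply fpn|apply pow_le; auto].
    + simpl. apply Rmult_le_compat_l. apply Fs_nonneg; auto. exact IHj.
Qed.

Lemma C2 j N : (EE N) ^ j <= sum_f_R0 (fp mu j) (j * N).
Proof. induction j.
  - simpl. lra.
  - simpl pow. apply Rle_trans with (EE N * sum_f_R0 (fp mu j) (j * N)).
    apply Rmult_le_compat_l. apply EE_nonneg. exact IHj.
    apply Rle_trans with (sum_f_R0 (fun n => sum_f_R0 (fun m => fp mu 1 m * fp mu j (n - m)%nat) n) (N + j * N)).
    apply prod_le_cauchy; intros; apply fpn.
    change (S j * N)%nat with (N + j * N)%nat. apply Req_le. apply sum_eq. intros n _.
    change (S j) with (1 + j)%nat. rewrite fp_mult by auto. reflexivity.
Qed.

Lemma fp1_ex : ex_series (fp mu 1).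
Proof. apply (@ex_series_le R_AbsRing R_CompleteNormedModule _ (fun n => C * r ^ n)).
  intros n. change (norm (fp mu 1 n)) with (Rabs (fp mu 1 n)). rewrite Rabs_pos_eq by apply fpn. apply Hbound.
  apply (ex_series_scal (K:=R_AbsRing) (V:=R_NormedModule) C (fun n => r ^ n)). apply ex_series_geom.
  rewrite Rabs_pos_eq; lra. Qed.

Definition ee := Series (fp mu 1).
Lemma ee_is : is_series (fp mu 1) ee. Proof. apply Series_correct, fp1_ex. Qed.
Lemma EE_le_ee N : EE N <= ee. Proof. apply partial_le_series. intros; apply fpn. apply ee_is. Qed.
Lemma ee_le1 : ee <= 1. Proof. apply (series_le_bound _ _ _ ee_is). intros; apply fp_mass; auto. Qed.
Lemma ee_nonneg : 0 <= ee. Proof. pose proof (EE_le_ee 0). pose proof (EE_nonneg 0). lra. Qed.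

Lemma sum_mu_fp J n : sum_f_R0 (fun j => mu j * fp mu j n) J <= fp mu 1 (S n).
Proof. simpl fp. destruct (Compare_dec.le_lt_dec J n) as [h|h].
  - apply sum_mono. intros; apply Rmult_le_pos; auto; apply fpn. exact h.
  - rewrite (sum_trunc _ n J) by (try lia; intros i Hi; rewrite fp_zero by lia; lra). lra. Qed.

Lemma phi_ee : phi mu ee <= ee.
Proof.
  assert (Hb : 0 <= ee <= 1) by (split; [apply ee_nonneg|apply ee_le1]).
  apply (series_le_bound _ _ _ (phi_is mu mu_nn mu_sum ee Hb)). intros J.
  assert (HB : forall N, sum_f_R0 (fun j => mu j * ee ^ j) J <= ee + (ee - EE N)).
  { intros N.
    assert (H1 : sum_f_R0 (fun j => mu j * EE N ^ j) J <= ee).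
    { apply Rle_trans with (sum_f_R0 (fun j => mu j * sum_f_R0 (fp mu j) (J * N)) J).
      { apply sum_Rle. intros j Hj. apply Rmult_le_compat_l; auto. apply Rle_trans with (sum_f_R0 (fp mu j) (j * N)).
        apply C2. apply sum_mono. intros; apply fpn. apply Nat.mul_le_mono_r; lia. }
      rewrite (sum_eq _ (fun j => sum_f_R0 (fun n => mu j * fp mu j n) (J * N))) by (intros; rewrite sum_scal_l; reflexivity).
      rewrite <- sum_swap.
      apply Rle_trans with (sum_f_R0 (fun n => fp mu 1 (S n)) (J * N)).
      apply sum_Rle; intros; apply sum_mu_fp.
      apply Rle_trans with (EE (S (J * N))). unfold EE. rewrite sum_shift. simpl (fp mu 1 0). lra.
      apply EE_le_ee. }
    assert (H2 : sum_f_R0 (fun j => mu j * ee ^ j) J - sum_f_R0 (fun j => mu j * EE N ^ j) J <= (ee - EE N)).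
    { rewrite <- minus_sum. apply Rle_trans with (sum_f_R0 (fun j => INR j * mu j * (ee - EE N)) J).
      apply sum_Rle. intros j _. pose proof (pow_diff ee (EE N) j (conj (EE_nonneg N) (EE_le_ee N)) (ee_le1)).
      pose proof (mu_nn j). nra.
      rewrite (sum_eq _ (fun j => (ee - EE N) * (INR j * mu j))) by (intros; ring). rewrite sum_scal_l.
      assert (sum_f_R0 (fun j => INR j * mu j) J <= 1).
      apply partial_le_series; auto. intros; apply Rmult_le_pos; auto; apply pos_INR.
      pose proof (EE_le_ee N). nra. }
    lra. }
  destruct (Rle_or_lt (sum_f_R0 (fun j => mu j * ee ^ j) J) ee) as [h|h]. exact h.
  destruct (lim_eps _ _ (ser_lim _ _ ee_is) (sum_f_R0 (fun j => mu j * ee ^ j) J - ee)) as [N HN]. lra.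
  specialize (HN N (le_n N)). apply Rabs_def2 in HN. specialize (HB N). unfold EE in HB. lra.
Qed.

Lemma ee_one : ee = 1.
Proof. apply (extinction mu mu_nn mu_sum mu_crit ee (conj ee_nonneg ee_le1) phi_ee j0 Hj0 Hmj0). Qed.

Lemma Fs_le_EE N s : 0 <= s <= 1 -> Fs N s <= EE N.
Proof. intros Hs. apply sum_Rle. intros n _. pose proof (fpn 1 n).
  assert (s ^ n <= 1) by (rewrite <- (pow1 n); apply pow_incr; lra). nra. Qed.

Lemma Fs_le1 N s : 0 <= s <= 1 -> Fs N s <= 1.
Proof. intros Hs. apply Rle_trans with (EE N). apply Fs_le_EE; auto. apply fp_mass; auto. Qed.

Lemma F1 M s : 0 <= s <= 1 -> Fs (S M) s <= s * phi mu (Fs (S M) s).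
Proof. intros Hs. set (y := Fs (S M) s).
  assert (Hy : 0 <= y <= 1) by (split; [apply Fs_nonneg; lra| apply Fs_le1; auto]).
  assert (E : y = s * sum_f_R0 (fun j => sum_f_R0 (fun n => mu j * fp mu j n * s ^ n) M) M).
  { unfold y, Fs. rewrite sum_shift. simpl (fp mu 1 0). rewrite Rmult_0_l, Rplus_0_l.
    rewrite <- (tri_swap (fun j n => mu j * fp mu j n * s ^ n)).
    2:{ intros j n Hjn. rewrite fp_zero by (auto; lia). ring. }
    rewrite <- sum_scal_l. apply sum_eq. intros n _. simpl fp. simpl pow.
    rewrite <- sum_scal_l. rewrite Rmult_comm, scal_sum. apply sum_eq. intros; ring. }
  rewrite E at 1. apply Rmult_le_compat_l. lra.
  apply Rle_trans with (sum_f_R0 (fun j => mu j * y ^ j) M).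
  2:{ apply partial_le_series. intros; apply Rmult_le_pos; auto; apply pow_le; lra. apply phi_is; auto. }
  apply sum_Rle. intros j _.
  rewrite (sum_eq _ (fun n => mu j * (fp mu j n * s ^ n))) by (intros; ring). rewrite sum_scal_l.
  apply Rmult_le_compat_l; auto. apply Rle_trans with (Fs M s ^ j). apply C1; lra.
  apply pow_incr. split. apply Fs_nonneg; lra. unfold y, Fs. apply sum_mono. intros; apply Rmult_le_pos; [apply fpn|apply pow_le; lra]. lia.
Qed.

Definition AA := C * r / (1 - r) ^ 2.

Lemma AA_nonneg : 0 <= AA.
Proof. unfold AA. apply Rmult_le_pos. apply Rmult_le_pos; lra. left. apply Rinv_0_lt_compat. apply pow_lt; lra. Qed.

Lemma EE_Fs N s : 0 <= s <= 1 -> EE N - Fs N s <= AA * (1 - s).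
Proof. intros Hs. unfold EE, Fs. rewrite <- minus_sum.
  apply Rle_trans with (sum_f_R0 (fun n => (C * (INR n * r ^ n)) * (1 - s)) N).
  { apply sum_Rle. intros n _. pose proof (pow_diff 1 s n (conj (proj1 Hs) (proj2 Hs)) (Rle_refl 1)).
    rewrite pow1 in H. pose proof (Hbound n). pose proof (fpn 1 n).
    assert (0 <= 1 - s ^ n) by (assert (s ^ n <= 1) by (rewrite <- (pow1 n); apply pow_incr; lra); lra).
    assert (fp mu 1 n - fp mu 1 n * s ^ n = fp mu 1 n * (1 - s ^ n)) by ring. rewrite H3.
    assert (fp mu 1 n * (1 - s ^ n) <= (C * r ^ n) * (1 - s ^ n)) by (apply Rmult_le_compat_r; auto).
    assert (0 <= C * r ^ n) by (apply Rmult_le_pos; auto; apply pow_le; lra).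
    assert ((C * r ^ n) * (1 - s ^ n) <= (C * r ^ n) * (INR n * (1 - s))) by (apply Rmult_le_compat_l; auto).
    nra. }
  rewrite (sum_eq _ (fun n => (C * (1 - s)) * (INR n * r ^ n))) by (intros; ring). rewrite sum_scal_l.
  pose proof (sum_nr r N Hr). unfold AA.
  assert (0 < (1 - r) ^ 2) by (apply pow_lt; lra).
  assert (sum_f_R0 (fun n => INR n * r ^ n) N <= r / (1 - r) ^ 2).
  { apply (Rmult_le_reg_l ((1-r)^2)); auto. field_simplify; lra. }
  assert (0 <= C * (1 - s)) by (apply Rmult_le_pos; lra).
  apply Rle_trans with (C * (1 - s) * (r / (1 - r) ^ 2)). apply Rmult_le_compat_l; auto.
  unfold Rdiv. lra.
Qed.

Lemma no_decay_false : False.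
Proof.
  set (B := AA + 1). assert (HB : 1 <= B) by (pose proof AA_nonneg; unfold B; lra).
  destruct (g_bound mu mu_nn mu_sum mu_crit (1 / (4 * B))) as [K HK].
  { apply Rdiv_lt_0_compat; lra. }
  set (D := 4 * INR K ^ 2 * B ^ 2 + 2 * B + 4).
  assert (HK2 : 0 <= INR K ^ 2) by (apply pow_le, pos_INR).
  assert (HD : 4 <= D) by (unfold D; assert (0 <= INR K ^ 2 * B ^ 2) by (apply Rmult_le_pos; nra); nra).
  set (d := 1 / D). assert (Hd : 0 < d <= 1/4).
  { unfold d. split. apply Rdiv_lt_0_compat; lra. apply Rmult_le_reg_l with D. lra. field_simplify; lra. }
  set (s := 1 - d).
  assert (Hs : 0 <= s <= 1) by (unfold s; lra).
  destruct (lim_eps _ _ (ser_lim _ _ ee_is) d (proj1 Hd)) as [N HN].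
  specialize (HN (S N) (le_S _ _ (le_n N))). apply Rabs_def2 in HN. rewrite ee_one in HN.
  pose proof (EE_Fs (S N) s Hs) as H1. unfold EE in H1.
  set (y := Fs (S N) s) in *.
  assert (Hy : 0 <= y <= 1) by (split; [apply Fs_nonneg; lra| apply Fs_le1; auto]).
  pose proof (F1 N s Hs) as H2. fold y in H2.
  pose proof (HK y Hy) as H3.
  assert (H4 : 1 - y <= B * d) by (unfold B, s in *; lra).
  assert (Hphi : 0 <= phi mu y).
  { apply (series_le_bound _ _ _ (phi_is mu mu_nn mu_sum y Hy)) || idtac.
    pose proof (phi_is mu mu_nn mu_sum y Hy) as Hp.
    apply (lim_ge_c _ _ _ 0 (ser_lim _ _ Hp)). intros; apply sum_nonneg. intros; apply Rmult_le_pos; auto; apply pow_le; lra. }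
  assert (H5 : d * y <= phi mu y - y).
  { unfold s in H2. assert (y <= phi mu y) by nra. nra. }
  assert (H6 : (1 - y) ^ 2 <= (B * d) ^ 2) by (apply pow_incr; lra).
  assert (H7 : INR K ^ 2 * (1 - y) ^ 2 <= INR K ^ 2 * (B * d) ^ 2) by (apply Rmult_le_compat_l; auto).
  assert (H8 : 1 / (4 * B) * (1 - y) <= 1 / (4 * B) * (B * d)).
  { apply Rmult_le_compat_l. left; apply Rdiv_lt_0_compat; lra. exact H4. }
  assert (H9 : 1 / (4 * B) * (B * d) = d / 4) by (field; lra).
  assert (H10 : 1 - B * d >= 1/2).
  { assert (B * d <= 1/2).
    { assert (X : 2 * B <= D) by (unfold D; assert (0 <= INR K ^ 2 * B ^ 2) by (apply Rmult_le_pos; nra); nra).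
      unfold d. apply Rmult_le_reg_l with D. lra.
      replace (D * (B * (1 / D))) with B by (field; lra). lra. }
    lra. }
  assert (H11 : INR K ^ 2 * (B * d) ^ 2 < d / 4).
  { replace (INR K ^ 2 * (B * d) ^ 2) with (d * (INR K ^ 2 * B ^ 2 * d)) by ring.
    apply Rmult_lt_compat_l with (r := d) in H9 || idtac.
    assert (INR K ^ 2 * B ^ 2 * d < 1/4).
    { assert (X : 4 * (INR K ^ 2 * B ^ 2) < D) by (unfold D; nra).
      unfold d. apply Rmult_lt_reg_l with D. lra.
      replace (D * (INR K ^ 2 * B ^ 2 * (1 / D))) with (INR K ^ 2 * B ^ 2) by (field; lra). lra. }
    nra. }
  assert (d * y >= d / 2) by nra.
  lra.
Qed.
End NoDecay.

Lemma exp_le_mono x y : x <= y -> exp x <= exp y.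
Proof. intros [h|h]. left; apply exp_increasing; auto. subst; lra. Qed.

Lemma exp_nat a n : exp (a * INR n) = exp a ^ n.
Proof. induction n. simpl. rewrite Rmult_0_r, exp_0. reflexivity.
  rewrite S_INR. replace (a * (INR n + 1)) with (a * INR n + a) by ring. rewrite exp_plus, IHn. simpl. ring. Qed.

Section Main.
Variable mu : nat -> R.
Hypothesis mu_nn : forall k, 0 <= mu k.
Hypothesis mu_sum : is_series mu 1.
Hypothesis mu_crit : is_series (fun k => INR k * mu k) 1.

Lemma diff_series : is_series (fun k => mu k - INR k * mu k) 0.
Proof. apply lim_ser. apply is_lim_seq_ext with (fun N => sum_f_R0 mu N - sum_f_R0 (fun k => INR k * mu k) N).
  intros; rewrite minus_sum; reflexivity. replace 0 with (1 - 1) by ring.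
  apply is_lim_seq_minus'; apply ser_lim; auto. Qed.

Lemma degenerate_mu0 : (forall j, (2 <= j)%nat -> mu j = 0) -> mu 0%nat = 0.
Proof. intros H. pose proof (ser_lim _ _ diff_series) as L.
  assert (E : forall N, sum_f_R0 (fun k => mu k - INR k * mu k) N = mu 0%nat).
  { induction N. simpl. ring. rewrite tech5, IHN. destruct N. simpl. ring. rewrite (H (S (S N))) by lia. ring. }
  pose proof (lim_le_c _ _ (mu 0%nat) 0 L (fun n _ => Req_le _ _ (E n))).
  pose proof (lim_ge_c _ _ (mu 0%nat) 0 L (fun n _ => Req_le _ _ (eq_sym (E n)))). lra. Qed.

Lemma mu0_pos j0 : (2 <= j0)%nat -> 0 < mu j0 -> 0 < mu 0%nat.
Proof. intros Hj Hm. pose proof (ser_lim _ _ diff_series) as L.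
  set (t := fun k => mu k - INR k * mu k).
  assert (Ht : forall k, (1 <= k)%nat -> t k <= 0).
  { intros k Hk. unfold t. assert (1 <= INR k) by (apply (le_INR 1); auto). pose proof (mu_nn k). nra. }
  assert (H1 : forall m, (m < j0)%nat -> sum_f_R0 t m <= mu 0%nat).
  { induction m; intros Hm'. unfold t; simpl; lra. rewrite tech5. pose proof (Ht (S m)). specialize (IHm ltac:(lia)). assert (t (S m) <= 0) by (apply Ht; lia). lra. }
  assert (H2 : forall N, (j0 <= N)%nat -> sum_f_R0 t N <= mu 0%nat + t j0).
  { intros N HN. induction HN. destruct j0. lia. rewrite tech5. pose proof (H1 j0 ltac:(lia)). lra.
    rewrite tech5. assert (t (S m) <= 0) by (apply Ht; lia). lra. }
  pose proof (lim_le_c _ _ _ j0 L H2).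
  unfold t in H. assert (2 <= INR j0) by (apply (le_INR 2); auto). nra. Qed.

Lemma conv_zero_deg : mu 0%nat = 0 -> forall n m, (m < n)%nat -> conv_pow mu n m = 0.
Proof. intros H0. induction n; intros m Hm. lia. simpl. apply sum_zero. intros i Hi.
  destruct i. rewrite H0; ring. rewrite IHn by lia. ring. Qed.

Definition q n := walk_prob mu n.

Lemma q_nonneg n : 0 <= q n.
Proof. destruct n; unfold q, walk_prob. lra. apply conv_nonneg; auto. Qed.

Lemma q_le1 n : q n <= 1.
Proof. destruct n; unfold q, walk_prob. lra. apply conv_le1; auto. Qed.

Lemma fp_le_q n : (1 <= n)%nat -> fp mu 1 n <= q n.
Proof. intros Hn. destruct n. lia. unfold q, walk_prob.
  pose proof (fp_le_conv mu mu_nn (S n) 1 ltac:(lia)) as H. replace (S n - 1)%nat with n in H by lia. exact H. Qed.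

Lemma supermult j0 : (2 <= j0)%nat -> forall n m, (1 <= n)%nat -> (1 <= m)%nat ->
  mu j0 * mu 0%nat ^ (j0 - 2) * q n * q m <= q (n + m + j0 - 1).
Proof. intros Hj n m Hn Hm. destruct n as [|a]; [lia|]. destruct m as [|b]; [lia|].
  destruct j0 as [|[|i]]; try lia.
  replace (S a + S b + S (S i) - 1)%nat with (S (a + b + S (S i))) by lia.
  unfold q, walk_prob. replace (S (S i) - 2)%nat with i by lia.
  rewrite <- (conv_1 mu (S (S i))), <- (conv_0 mu i).
  pose proof (conv_mul mu mu_nn (S a) a (S b) b) as H1.
  pose proof (conv_mul mu mu_nn (S a + S b) (a + b) 1 (S (S i))) as H2.
  pose proof (conv_mul mu mu_nn (S a + S b + 1) (a + b + S (S i)) i 0) as H3.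
  replace (S a + S b + 1 + i)%nat with (S (a + b + S (S i))) in H3 by lia.
  rewrite Nat.add_0_r in H3.
  pose proof (conv_nonneg mu mu_nn 1 (S (S i))). pose proof (conv_nonneg mu mu_nn i 0).
  pose proof (conv_nonneg mu mu_nn (S a) a). pose proof (conv_nonneg mu mu_nn (S b) b).
  assert (conv_pow mu (S a) a * conv_pow mu (S b) b * conv_pow mu 1 (S (S i)) <= conv_pow mu (S a + S b) (a + b) * conv_pow mu 1 (S (S i))) by (apply Rmult_le_compat_r; auto).
  assert (conv_pow mu (S a) a * conv_pow mu (S b) b * conv_pow mu 1 (S (S i)) * conv_pow mu i 0 <= conv_pow mu (S a + S b + 1) (a + b + S (S i)) * conv_pow mu i 0).
  { apply Rmult_le_compat_r; auto. lra. }
  nra.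
Qed.
End Main.

Section Final.
Variable mu : nat -> R.
Hypothesis mu_nn : forall k, 0 <= mu k.
Hypothesis mu_sum : is_series mu 1.
Hypothesis mu_crit : is_series (fun k => INR k * mu k) 1.
Variable j0 : nat.
Hypothesis Hj0 : (2 <= j0)%nat.
Hypothesis Hmj0 : 0 < mu j0.
Variable delta : R.
Hypothesis Hdelta : 0 < delta.

Let c := mu j0 * mu 0%nat ^ (j0 - 2).
Lemma c_pos : 0 < c.
Proof. unfold c. apply Rmult_lt_0_compat; auto. apply pow_lt. apply (mu0_pos mu mu_nn mu_sum mu_crit j0); auto. Qed.

Lemma good_n0 : exists n0, (1 <= n0)%nat /\ exp (- delta * INR (n0 + j0 - 1)) <= c * q mu n0.
Proof.
  apply NNPP. intro Hno.
  assert (Hlt : forall n, (1 <= n)%nat -> c * q mu n < exp (- delta * INR (n + j0 - 1))).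
  { intros n Hn. apply Rnot_le_lt. intro h. apply Hno. exists n. auto. }
  pose proof c_pos as Hc.
  apply (no_decay_false mu mu_nn mu_sum mu_crit j0 Hj0 Hmj0 (/ c) (exp (- delta))).
  - left; apply Rinv_0_lt_compat; auto.
  - split. left; apply exp_pos. rewrite <- exp_0. apply exp_increasing. lra.
  - intros n. destruct n as [|n]. simpl. rewrite Rmult_1_r. left; apply Rinv_0_lt_compat; auto.
    apply Rle_trans with (q mu (S n)). apply fp_le_q; auto; lia.
    specialize (Hlt (S n) ltac:(lia)).
    rewrite <- exp_nat.
    assert (exp (- delta * INR (S n + j0 - 1)) <= exp (- delta * INR (S n))).
    { apply exp_le_mono. assert (INR (S n) <= INR (S n + j0 - 1)) by (apply le_INR; lia). nra. }
    apply (Rmult_le_reg_l c); auto. rewrite <- Rmult_assoc, Rinv_r by lra. lra.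
Qed.

Lemma iterate n0 : (1 <= n0)%nat -> exp (- delta * INR (n0 + j0 - 1)) <= c * q mu n0 ->
  forall t n, (1 <= n)%nat -> q mu n * exp (- delta * INR (t * (n0 + j0 - 1))) <= q mu (n + t * (n0 + j0 - 1)).
Proof. intros Hn0 Hgood. induction t; intros n Hn.
  - simpl. rewrite Rmult_0_r, exp_0, Nat.add_0_r. lra.
  - set (M := (n0 + j0 - 1)%nat) in *.
    assert (EM : M = (n0 + j0 - 1)%nat) by reflexivity. clearbody M.
    replace (n + S t * M)%nat with ((n + t * M) + n0 + j0 - 1)%nat by (rewrite Nat.mul_succ_l; lia).
    pose proof (supermult mu mu_nn j0 Hj0 (n + t * M) n0 ltac:(lia) Hn0) as H.
    fold c in H.
    replace (- delta * INR (S t * M)) with (- delta * INR (t * M) + - delta * INR M)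
      by (rewrite (Nat.mul_succ_l t M), plus_INR; ring).
    rewrite exp_plus.
    specialize (IHt n Hn). pose proof (q_nonneg mu mu_nn (n + t * M)).
    pose proof (q_nonneg mu mu_nn n). pose proof (exp_pos (- delta * INR (t * M))).
    pose proof (exp_pos (- delta * INR M)).
    assert (q mu (n + t * M) * exp (- delta * INR M) <= q mu (n + t * M) * (c * q mu n0))
      by (apply Rmult_le_compat_l; auto).
    assert (q mu n * exp (- delta * INR (t * M)) * exp (- delta * INR M) <= q mu (n + t * M) * exp (- delta * INR M))
      by (apply Rmult_le_compat_r; lra).
    nra.
Qed.

Lemma residues (M : nat) : forall RR, exists K, forall n, (1 <= n)%nat -> 0 < q mu n -> (n mod M < RR)%nat ->
  exists m, (1 <= m <= K)%nat /\ 0 < q mu m /\ m mod M = n mod M.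
Proof. induction RR.
  - exists 0%nat. intros; lia.
  - destruct IHRR as [K HK].
    destruct (classic (exists n1, (1 <= n1)%nat /\ 0 < q mu n1 /\ n1 mod M = RR)) as [[n1 [h1 [h2 h3]]]|hno].
    + exists (max K n1). intros n Hn Hq Hr. destruct (Nat.eq_dec (n mod M) RR) as [e|e].
      * exists n1. split. lia. split; auto. lia.
      * destruct (HK n Hn Hq ltac:(lia)) as [m [hm1 hm2]]. exists m. split. lia. auto.
    + exists K. intros n Hn Hq Hr. destruct (Nat.eq_dec (n mod M) RR) as [e|e].
      * exfalso. apply hno. exists n. auto.
      * apply HK; auto. lia.
Qed.

Lemma kappa : forall K, exists kap, 0 < kap /\ forall m, (1 <= m <= K)%nat -> 0 < q mu m -> kap <= q mu m.
Proof. induction K.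
  - exists 1. split. lra. intros; lia.
  - destruct IHK as [kap [hk H]]. destruct (Rlt_or_le 0 (q mu (S K))) as [hq|hq].
    + exists (Rmin kap (q mu (S K))). split. apply Rmin_pos; auto. intros m Hm Hqm.
      destruct (Nat.eq_dec m (S K)). subst. apply Rmin_r. apply Rle_trans with kap. apply Rmin_l. apply H; auto; lia.
    + exists kap. split; auto. intros m Hm Hqm. destruct (Nat.eq_dec m (S K)). subst. lra. apply H; auto; lia.
Qed.

Lemma lower_bound : exists kap, 0 < kap /\ forall n, (1 <= n)%nat -> 0 < q mu n -> kap * exp (- delta * INR n) <= q mu n.
Proof.
  destruct good_n0 as [n0 [Hn0 Hgood]].
  set (M := (n0 + j0 - 1)%nat).
  assert (HM : M <> 0%nat) by (unfold M; lia).
  destruct (residues M M) as [K HK].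
  destruct (kappa K) as [kap [hk Hk]].
  exists kap. split; auto. intros n Hn Hq.
  assert (Hexp1 : exp (- delta * INR n) <= 1).
  { rewrite <- exp_0. apply exp_le_mono. pose proof (pos_INR n). nra. }
  destruct (HK n Hn Hq (Nat.mod_upper_bound n M HM)) as [m [hm1 [hm2 hm3]]].
  destruct (Compare_dec.le_lt_dec n K) as [hnK|hnK].
  - pose proof (Hk n ltac:(lia) Hq). pose proof (exp_pos (- delta * INR n)). nra.
  - pose proof (Nat.div_mod n M HM) as En. pose proof (Nat.div_mod m M HM) as Em.
    set (a := (n / M)%nat) in *. set (b := (m / M)%nat) in *.
    assert (Hba : (b <= a)%nat) by nia.
    assert (Hn_eq : n = (m + (a - b) * M)%nat) by nia.
    pose proof (iterate n0 Hn0 Hgood (a - b) m ltac:(lia)) as It. fold M in It. rewrite <- Hn_eq in It.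
    pose proof (Hk m ltac:(lia) hm2).
    assert (exp (- delta * INR n) <= exp (- delta * INR ((a - b) * M))).
    { apply exp_le_mono. assert (INR ((a - b) * M) <= INR n) by (apply le_INR; lia). nra. }
    pose proof (exp_pos (- delta * INR n)).
    pose proof (exp_pos (- delta * INR ((a - b) * M))).
    nra.
Qed.
End Final.

Theorem mainTheorem12 (mu : nat -> R) :
  offspring_distribution mu -> critical mu ->
  forall eps : R, 0 < eps ->
  exists N : nat, forall n : nat, (N <= n)%nat -> 0 < walk_prob mu n ->
    exp (- (eps * INR n)) <= walk_prob mu n <= exp (eps * INR n).
Proof.
  intros [mu_nn mu_sum] mu_crit eps Heps. unfold critical in mu_crit.
  destruct (classic (exists j0, (2 <= j0)%nat /\ 0 < mu j0)) as [[j0 [Hj0 Hm]]|Hno].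
  - destruct (lower_bound mu mu_nn mu_sum mu_crit j0 Hj0 Hm (eps/2) ltac:(lra)) as [kap [hk Hk]].
    destruct (INR_unbounded (- ln kap / (eps/2))) as [N0 HN0].
    exists (S N0). intros n Hn Hq.
    specialize (Hk n ltac:(lia) Hq). unfold q in Hk.
    split.
    + assert (HnN : INR N0 <= INR n) by (apply le_INR; lia).
      assert (H1 : - (eps / 2) * INR n <= ln kap).
      { assert (- ln kap < eps / 2 * INR N0).
        { apply (Rmult_lt_reg_r (/ (eps/2))). apply Rinv_0_lt_compat; lra.
          replace (eps / 2 * INR N0 * / (eps / 2)) with (INR N0) by (field; lra). exact HN0. }
        nra. }
      assert (H2 : exp (- (eps / 2) * INR n) <= kap) by (rewrite <- (exp_ln kap hk); apply exp_le_mono; auto).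
      replace (- (eps * INR n)) with (- (eps / 2) * INR n + - (eps / 2) * INR n) by field.
      rewrite exp_plus. pose proof (exp_pos (- (eps / 2) * INR n)).
      apply Rle_trans with (kap * exp (- (eps / 2) * INR n)); auto.
      apply Rmult_le_compat_r; lra.
    + apply Rle_trans with 1. apply (q_le1 mu mu_nn mu_sum).
      rewrite <- exp_0. apply exp_le_mono. pose proof (pos_INR n). nra.
  - assert (Hdeg : forall j, (2 <= j)%nat -> mu j = 0).
    { intros j Hj. destruct (mu_nn j) as [h|h]; auto. exfalso; apply Hno; exists j; auto. }
    pose proof (degenerate_mu0 mu mu_sum mu_crit Hdeg) as H0.
    exists 0%nat. intros n _ Hq. exfalso. destruct n as [|n]. simpl in Hq. lra.
    unfold walk_prob in Hq. rewrite (conv_zero_deg mu H0 (S n) n) in Hq by lia. lra.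
Qed.
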